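(* Let $\mathbb{F}$ be a field and $A$ a matrix over $\mathbb{F}$ of dual tree-depth at most $d$. Then there is a $(d+3,\mathbb{F})$-matrix-tree $T(A)$ such that $A=A(T(A))$ (identifying the rows of $A$ with the nodes labelled $L_R$ and the columns with the nodes labelled $L_C$).
   Context: The depth of a rooted tree is the number of edges on a longest root-to-leaf path; a rooted forest's depth is the maximum depth of its components. An elimination forest of a graph $G$ is a rooted forest $F$ with $V(F)=V(G)$ such that every edge of $G$ joins a vertex to one of its ancestors in $F$; the tree-depth $\mathrm{td}(G)$ is the minimum of $\mathrm{depth}(F)+1$ over elimination forests. The dual graph $G_D(A)$ has the rows of $A$ as vertices, two rows adjacent iff some column has non-zero entries in both; the dual tree-depth of $A$ is $\mathrm{td}(G_D(A))$. A $(d,\mathbb{F})$-matrix-tree is a rooted tree of depth at most $d$ with unary labels from $\{L_R,L_C\}\cup\{L_{i,\alpha}: i\in\{0,\dots,d\},\alpha\in\mathbb{F}\}$ such that: every node labelled $L_C$ is a leaf; every other non-root node is labelled $L_R$; and each $L_C$-leaf at distance $k\le d$ from the root carries, for each $i\in\{0,\dots,k-1\}$, exactly one label $L_{i,\alpha}$. The matrix $A(T)$ has rows the $L_R$-nodes, columns the $L_C$-nodes, and entry at $(r,c)$ equal to $0$ if $r$ is not an ancestor of $c$, and equal to the unique $\alpha$ with $c$ labelled $L_{i,\alpha}$ if $r$ is an ancestor of $c$ at distance $i$ from the root. *)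

(* Defs.v *)
From HB Require Import structures.
From mathcomp Require Import all_boot all_algebra.
Set Implicit Arguments. Unset Strict Implicit. Unset Printing Implicit Defensive.
Import GRing.Theory.
Local Open Scope ring_scope.

(* ---------- Rooted forests, given by a parent function ----------
   A rooted forest on a finite vertex type V is a map p : V -> V whose
   fixed points are the roots and such that every vertex reaches a root
   by iterating p.  u is an ancestor of v iff u = p^k(v) for some k. *)

Definition is_rooted_forest (V : finType) (p : V -> V) : Prop :=
  forall v : V, exists k : nat, p (iter k p v) = iter k p v.

Definition ancestor (V : finType) (p : V -> V) (u v : V) : Prop :=
  exists k : nat, iter k p v = u.

(* depth(F) <= D : every root-to-leaf path has at most D edges,
   i.e. every vertex is at most D steps below its root. *)
Definition forest_depth_le (V : finType) (p : V -> V) (D : nat) : Prop :=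
  forall v : V, p (iter D p v) = iter D p v.

Definition elimination_forest (V : finType) (adj : rel V) (p : V -> V) : Prop :=
  is_rooted_forest p /\
  forall u v : V, adj u v -> ancestor p u v \/ ancestor p v u.

Definition treedepth_le (V : finType) (adj : rel V) (t : nat) : Prop :=
  exists p : V -> V, elimination_forest adj p /\
    exists D : nat, forest_depth_le p D /\ (D.+1 <= t)%N.

Definition dual_adj (F : fieldType) (m n : nat) (A : 'M[F]_(m, n)) : rel 'I_m :=
  fun i j => (i != j) && [exists k : 'I_n, (A i k != 0) && (A j k != 0)].

Definition dual_treedepth_le (F : fieldType) (m n : nat) (A : 'M[F]_(m, n))
  (d : nat) : Prop := treedepth_le (dual_adj A) d.

(* A rooted tree on V with unary labels: mt_LR v (v has label L_R),
   mt_LC v (label L_C), mt_Lab i a v (label L_{i,a}). *)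
Record labelled_tree (F : fieldType) (V : finType) := LabelledTree {
  mt_root : V;
  mt_par : V -> V;
  mt_LR : pred V;
  mt_LC : pred V;
  mt_Lab : nat -> F -> pred V
}.

Definition node_dist (F : fieldType) (V : finType) (T : labelled_tree F V)
  (v : V) (k : nat) : Prop :=
  iter k (mt_par T) v = mt_root T /\
  forall j : nat, (j < k)%N -> iter j (mt_par T) v <> mt_root T.

Definition is_leaf (F : fieldType) (V : finType) (T : labelled_tree F V) (v : V) : Prop :=
  forall u : V, u <> v -> mt_par T u <> v.

Definition is_matrix_tree (F : fieldType) (d : nat) (V : finType)
  (T : labelled_tree F V) : Prop :=
      mt_par T (mt_root T) = mt_root T /\
      (forall v : V, exists k : nat, iter k (mt_par T) v = mt_root T) /\
      (forall v : V, iter d (mt_par T) v = mt_root T) /\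
      (forall (i : nat) (a : F) (v : V), mt_Lab T i a v -> (i <= d)%N) /\
      (forall v : V, mt_LC T v -> is_leaf T v /\ ~~ mt_LR T v) /\
      (forall v : V, v <> mt_root T -> ~~ mt_LC T v -> mt_LR T v) /\
      (forall (c : V) (k : nat), mt_LC T c -> node_dist T c k -> (k <= d)%N ->
         forall i : nat, (i < k)%N -> exists! a : F, mt_Lab T i a c).

Definition mt_entry (F : fieldType) (V : finType) (T : labelled_tree F V)
  (r c : V) (x : F) : Prop :=
  (~ ancestor (mt_par T) r c /\ x = 0) \/
  (ancestor (mt_par T) r c /\
     exists i : nat, node_dist T r i /\ mt_Lab T i x c).

(* Main.v *)
Require Import Defs.
From HB Require Import structures.
From mathcomp Require Import all_boot all_algebra zify.
From Stdlib Require Import Classical.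
Set Implicit Arguments. Unset Strict Implicit. Unset Printing Implicit Defensive.
Local Open Scope ring_scope.

Definition fixb (m : nat) (p : 'I_m -> 'I_m) (v : 'I_m) (k : nat) : bool :=
  p (iter k p v) == iter k p v.

Lemma depth_ex (m : nat) (p : 'I_m -> 'I_m) (D : nat)
  (H : forall v, p (iter D p v) = iter D p v) (v : 'I_m) : exists k, fixb p v k.
Proof. by exists D; rewrite /fixb H. Qed.

Definition depth (m : nat) (p : 'I_m -> 'I_m) (D : nat)
  (H : forall v, p (iter D p v) = iter D p v) (v : 'I_m) : nat :=
  ex_minn (depth_ex H v).

Lemma fixK (T : Type) (f : T -> T) x t : f x = x -> iter t f x = x.
Proof. by move=> fx; elim: t => //= t ->. Qed.

Lemma depth_fix m p D H v : p (iter (@depth m p D H v) p v) = iter (depth H v) p v.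
Proof. rewrite /depth; case: ex_minnP => k /eqP //. Qed.

Lemma depth_min m p D H v t : p (iter t p v) = iter t p v -> (@depth m p D H v <= t)%N.
Proof. rewrite /depth; case: ex_minnP => k _ Hm fx; apply: Hm; exact/eqP. Qed.

Lemma depth_le m p D H v : (@depth m p D H v <= D)%N.
Proof. exact: depth_min. Qed.

Lemma iter_after m p D H v t : (@depth m p D H v <= t)%N -> iter t p v = iter (depth H v) p v.
Proof.
move=> le; rewrite -(subnK le) iterD; apply: fixK; exact: depth_fix.
Qed.

Lemma anc_lt m p D H (r i : 'I_m) k : iter k p r = i -> i <> r ->
  (@depth m p D H i < depth H r)%N.
Proof.
move=> Hk ne.
set s := depth H r.
case: (leqP s k) => ks.
  have fi : p i = i by rewrite -Hk (iter_after ks) depth_fix.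
  have t0 : (depth H i <= 0)%N by apply: depth_min.
  apply: (leq_ltn_trans t0); rewrite lt0n; apply/eqP => s0.
  have fr : p r = r by have := depth_fix H r; rewrite -/s s0.
  by apply: ne; rewrite -Hk fixK.
have k0 : (0 < k)%N by case: k Hk {ks} => // /= Hk; case: ne.
have : (depth H i <= s - k)%N.
  apply: depth_min; rewrite -Hk -iterD subnK ?(ltnW ks) //; exact: depth_fix.
move=> le; apply: (leq_ltn_trans le); rewrite ltn_subrL k0 /=; exact: leq_ltn_trans ks.
Qed.

Lemma same_depth m p D H (i r r' : 'I_m) k k' : iter k p i = r -> iter k' p i = r' ->
  @depth m p D H r = depth H r' -> r = r'.
Proof.
wlog kk : k k' r r' / (k <= k')%N.
  move=> W H1 H2 H3; case: (leqP k k') => kk; first exact: (W k k').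
  by symmetry; apply: (W k' k) => //; exact: ltnW.
move=> H1 H2 H3; apply/eqP; apply/negPn/negP => /eqP ne.
have : iter (k' - k) p r = r' by rewrite -H1 -iterD subnK.
move/anc_lt => /(_ D H (nesym ne)); by rewrite H3 ltnn.
Qed.

Definition tpar (m n : nat) (p : 'I_m -> 'I_m) (cp : 'I_n -> option 'I_m)
  (v : option ('I_m + 'I_n)) : option ('I_m + 'I_n) :=
  match v with
  | None => None
  | Some (inl i) => if p i == i then None else Some (inl (p i))
  | Some (inr j) => omap inl (cp j)
  end.

Lemma iter_None m n p cp t : iter t (@tpar m n p cp) None = None.
Proof. exact: fixK. Qed.

Lemma iter_None_le m n p cp v a b : iter a (@tpar m n p cp) v = None -> (a <= b)%N ->
  iter b (tpar p cp) v = None.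
Proof. by move=> Ha ab; rewrite -(subnK ab) iterD Ha iter_None. Qed.

Lemma iter_row m n p cp D H r t : (t <= @depth m p D H r)%N ->
  iter t (@tpar m n p cp) (Some (inl r)) = Some (inl (iter t p r)).
Proof.
elim: t => // t IH lt; rewrite iterS IH ?(ltnW lt) //=.
case: eqP => // fx; have := depth_min H fx; by rewrite leqNgt lt.
Qed.

Lemma iter_row_end m n p cp D H r :
  iter (@depth m p D H r).+1 (@tpar m n p cp) (Some (inl r)) = None.
Proof. by rewrite iterS (@iter_row m n p cp D H r _ (leqnn _)) /= depth_fix eqxx. Qed.

Lemma iter_row_inv m n p cp D (i r : 'I_m) t :
  (forall v, p (iter D p v) = iter D p v) ->
  iter t (@tpar m n p cp) (Some (inl i)) = Some (inl r) -> iter t p i = r.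
Proof.
move=> H Ht; case: (leqP t (depth H i)) => le.
  by move: Ht; rewrite (@iter_row m n p cp D H i t le) => -[].
by move: Ht; rewrite (iter_None_le (@iter_row_end m n p cp D H i) le).
Qed.

Lemma node_dist_row (F : fieldType) m n p cp D H r LR LC Lab :
  node_dist (LabelledTree (F:=F) None (@tpar m n p cp) LR LC Lab) (Some (inl r)) (@depth m p D H r).+1.
Proof.
split; first exact: iter_row_end.
move=> j; rewrite ltnS => le /=; by rewrite (@iter_row m n p cp D H r j le).
Qed.

Definition col_par (F : fieldType) m n (A : 'M[F]_(m, n)) (dep : 'I_m -> nat) (j : 'I_n)
  : option 'I_m :=
  if [pick i | A i j != 0] is Some i0 then Some [arg max_(i > i0 | A i j != 0) dep i]
  else None.

Lemma col_par_spec (F : fieldType) m n (A : 'M[F]_(m, n)) dep j i :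
  col_par A dep j = Some i -> A i j != 0 /\ forall r, A r j != 0 -> (dep r <= dep i)%N.
Proof.
rewrite /col_par; case: pickP => [i0 Hi0|] // [<-].
case: arg_maxnP => // k Hk Hmax; split => // r; exact: Hmax.
Qed.

Lemma col_par_None (F : fieldType) m n (A : 'M[F]_(m, n)) dep j :
  col_par A dep j = None -> forall r, A r j = 0.
Proof.
rewrite /col_par; case: pickP => [i0 _|H0 _ r] //.
by apply/eqP; move/negbFE: (H0 r).
Qed.

Lemma key_anc (F : fieldType) m n (A : 'M[F]_(m, n)) p D H
  (Hadj : forall u v, dual_adj A u v -> ancestor p u v \/ ancestor p v u) r j i :
  A r j != 0 -> col_par A (@depth m p D H) j = Some i -> exists k, iter k p i = r.
Proof.
move=> Hr Hcp; have [Hi Hmax] := col_par_spec Hcp.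
case: (eqVneq r i) => [->|ne]; first by exists 0%N.
have adj : dual_adj A r i.
  by rewrite /dual_adj ne /=; apply/existsP; exists j; rewrite Hr Hi.
case: (Hadj _ _ adj) => [[k Hk]|[k Hk]]; first by exists k.
have ne' : i <> r by move=> E; rewrite E eqxx in ne.
have := anc_lt H Hk ne'; have := Hmax r Hr; lia.
Qed.

Theorem lemma11 (F : fieldType) (m n d : nat) (A : 'M[F]_(m, n)) :
  dual_treedepth_le A d ->
  exists (V : finType) (T : labelled_tree F V) (fR : 'I_m -> V) (fC : 'I_n -> V),
    is_matrix_tree (d + 3) T /\
        injective fR /\ injective fC /\
        (forall v : V, mt_LR T v <-> exists i : 'I_m, fR i = v) /\
        (forall v : V, mt_LC T v <-> exists j : 'I_n, fC j = v) /\
        (forall (i : 'I_m) (j : 'I_n), mt_entry T (fR i) (fC j) (A i j)).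
Proof.
move=> [p [[_ Hadj] [D [Hdep HD]]]].
pose dep := depth Hdep.
pose cp := col_par A dep.
pose lab := fun j t => if [pick r | (t == (dep r).+1) && (A r j != 0)] is Some r then A r j else 0.
exists (option ('I_m + 'I_n)).
exists (LabelledTree None (tpar p cp)
   (fun v => if v is Some (inl _) then true else false)
   (fun v => if v is Some (inr _) then true else false)
   (fun t a v => (t <= d + 3)%N && (if v is Some (inr j) then a == lab j t else false))).
exists (fun i => Some (inl i)), (fun j => Some (inr j)).
have depb : forall r, ((dep r).+1 <= d + 3)%N.
  by move=> r; have := depth_le Hdep r; rewrite /dep; lia.
have P3 : forall v, iter (d + 3) (tpar p cp) v = None.
  case=> [[r|j]|]; last exact: iter_None.
    exact: (iter_None_le (@iter_row_end m n p cp D Hdep r) (depb r)).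
  rewrite addn3 iterSr.
  change (iter (d.+2) (tpar p cp) (omap inl (cp j)) = None).
  case: (cp j) => [i|]; last exact: iter_None.
  apply: (iter_None_le (@iter_row_end m n p cp D Hdep i)).
  have := depth_le Hdep i; lia.
split.
  rewrite /is_matrix_tree /=; split => //; split; first by move=> v; exists (d + 3)%N.
  split => //; split; first by move=> i a v /andP[].
  split.
    case=> [[r|j]|] //= _; split => // u _; case: u => [[r|j']|] //=.
      by case: eqP.
    by case: (cp j').
  split; first by case=> [[r|j]|].
  case=> [[r|j]|] // k _ Hd Hk i Hi; exists (lab j i); split.
    by rewrite /= (leq_trans (ltnW Hi) Hk) eqxx.
  by move=> a /andP[_ /eqP ->].
split; first by move=> x y [].
split; first by move=> x y [].
split.
  case=> [[r|j]|] /=; split => //; first by exists r.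
    by case.
  by case.
split.
  case=> [[r|j]|] /=; split => //; try by case.
  by exists j.
move=> r j; rewrite /mt_entry.
case: (eqVneq (A r j) 0) => Hr.
  case: (classic (ancestor (tpar p cp) (Some (inl r)) (Some (inr j)))) => anc; last by left.
  right; split => //; exists (dep r).+1; split; first exact: node_dist_row.
  rewrite /= Hr depb /= /lab; case: pickP => [r' /andP[/eqP [Hd] Hr'] | _] //.
  exfalso; case: anc => [[|a] Ha] //.
  rewrite iterSr /= in Ha.
  case Hcp: (cp j) => [i|] in Ha; last by rewrite /= iter_None in Ha.
  have Ha' := iter_row_inv Hdep Ha.
  have [k Hk] := key_anc Hadj Hr' Hcp.
  have E := same_depth Ha' Hk Hd.
  by move: Hr'; rewrite -E Hr eqxx.
right.
case Hcp: (cp j) => [i|]; last by have := col_par_None Hcp r; move/eqP: Hr.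
have [k Hk] := key_anc Hadj Hr Hcp.
have Hk' : iter (minn k (dep i)) p i = r.
  case: (leqP k (dep i)) => le; first by [].
  by rewrite -Hk (iter_after (ltnW le)).
split.
  exists (minn k (dep i)).+1; rewrite iterSr /= Hcp /=.
  by rewrite (@iter_row m n p cp D Hdep i _ (geq_minr k (dep i))) Hk'.
exists (dep r).+1; split; first exact: node_dist_row.
rewrite /= depb /= /lab; case: pickP => [r' /andP[/eqP [Hd] Hr'] | /(_ r)]; last by rewrite eqxx Hr.
have [k2 Hk2] := key_anc Hadj Hr' Hcp.
by rewrite (same_depth Hk Hk2 Hd).
Qed.
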